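(* Suppose $p\in\mathbb{C}[z_1,z_2]$ is semi-stable. Then all common zeros of $p$ and $\tilde p$ in $\mathbb{C}_\infty\times\mathbb{C}_\infty$ lie in $(\mathbb{D}\times\mathbb{D}^{-1})\cup\mathbb{T}^2\cup(\mathbb{D}^{-1}\times\mathbb{D})$.
   Context: $\mathbb{D}$ is the open unit disk, $\mathbb{T}$ the unit circle, $\mathbb{C}_\infty=\mathbb{C}\cup\{\infty\}$, $\mathbb{D}^{-1}=\{z\in\mathbb{C}:|z|>1\}\cup\{\infty\}$. For $p$ of bidegree $(n,m)$, $\tilde p(z)=z_1^nz_2^m\overline{p(1/\bar z_1,1/\bar z_2)}$; $p$ is semi-stable if it has no zeros in $\mathbb{D}^2$ and $p,\tilde p$ have no common factor. Zeros at infinity for a polynomial $f$ of bidegree $(n,m)$: $f(a,\infty)=0$ means $z_2^mf(a,1/z_2)$ vanishes at $z_2=0$; $f(\infty,b)=0$ means $z_1^nf(1/z_1,b)$ vanishes at $z_1=0$; $f(\infty,\infty)=0$ means $z_1^nz_2^mf(1/z_1,1/z_2)$ vanishes at $(0,0)$. *)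

(* Defs.v *)
From HB Require Import structures.
From mathcomp Require Import all_boot all_order all_algebra.
From mathcomp Require Import complex.
From mathcomp Require Import reals.
Set Implicit Arguments. Unset Strict Implicit. Unset Printing Implicit Defensive.
Import Order.TTheory GRing.Theory Num.Theory.
Local Open Scope ring_scope.
Local Open Scope complex_scope.

(* Bivariate polynomials in C[z1,z2] are represented as {poly {poly C}}:
   the outer variable is z2, the inner one is z1.
   coef2 p i j = coefficient of z1^i z2^j. *)
Section Bivariate.
Variable R : realType.
Local Notation C := (R[i]).

Definition coef2 (p : {poly {poly C}}) (i j : nat) : C := (p`_j)`_i.

Definition mk2 (n m : nat) (c : nat -> nat -> C) : {poly {poly C}} :=
  \poly_(j < m.+1) \poly_(i < n.+1) c i j.

Definition eval2 (p : {poly {poly C}}) (a b : C) : C := (p.[b%:P]).[a].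

Definition deg1 (p : {poly {poly C}}) : nat :=
  (\max_(j < size p) (size (p`_j)%R).-1)%N.
Definition deg2 (p : {poly {poly C}}) : nat := (size p).-1.

Definition has_bidegree (p : {poly {poly C}}) (n m : nat) : Prop :=
  p != 0 /\ deg1 p = n /\ deg2 p = m.

(* reflection  tilde p (z) = z1^n z2^m conj(p(1/conj z1, 1/conj z2)) *)
Definition refl (n m : nat) (p : {poly {poly C}}) : {poly {poly C}} :=
  mk2 n m (fun i j => (coef2 p (n - i) (m - j))^*).

Definition rev1 (n m : nat) (f : {poly {poly C}}) : {poly {poly C}} :=
  mk2 n m (fun i j => coef2 f (n - i) j).
Definition rev2 (n m : nat) (f : {poly {poly C}}) : {poly {poly C}} :=
  mk2 n m (fun i j => coef2 f i (m - j)).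

(* Points of C_oo: None stands for infinity. *)
Definition ext_eval (n m : nat) (f : {poly {poly C}}) (x y : option C) : C :=
  match x, y with
  | Some a, Some b => eval2 f a b
  | None, Some b => eval2 (rev1 n m f) 0 b
  | Some a, None => eval2 (rev2 n m f) a 0
  | None, None => eval2 (rev1 n m (rev2 n m f)) 0 0
  end.

Definition in_D (x : option C) : Prop :=
  if x is Some a then `|a| < 1 else False.
Definition in_T (x : option C) : Prop :=
  if x is Some a then `|a| = 1 else False.
Definition in_Dinv (x : option C) : Prop :=
  if x is Some a then 1 < `|a| else True.

Definition no_common_factor (p q : {poly {poly C}}) : Prop :=
  forall d r s : {poly {poly C}}, p = d * r -> q = d * s ->
    exists c : C, d = c%:P%:P.

Definition semi_stable (n m : nat) (p : {poly {poly C}}) : Prop :=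
  has_bidegree p n m /\
  (forall a b : C, `|a| < 1 -> `|b| < 1 -> eval2 p a b != 0) /\
  no_common_factor p (refl n m p).
End Bivariate.

(* Main.v *)
Require Import Defs.
From HB Require Import structures.
From mathcomp Require Import all_boot all_order all_algebra.
From mathcomp Require Import complex.
From mathcomp Require Import reals.
From mathcomp Require Import ring lra zify.
Import Order.TTheory GRing.Theory Num.Theory.
Local Open Scope ring_scope.
Local Open Scope complex_scope.

Section Aux.
Variable R : realType.
Local Notation C := R[i].

Lemma root_bound (rho : C) : 0 < rho -> forall N (f : {poly C}),
  (size f <= N)%N -> f`_0 != 0 -> (forall w, root f w -> rho <= `|w|) ->
  forall k, `|f`_k| * rho ^+ k <= 2%:R ^+ N * `|f`_0|.
Proof.
move=> rho0; elim=> [|N IH] f.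
  by rewrite leqn0 size_poly_eq0 => /eqP ->; rewrite coef0 eqxx.
move=> sf f0 hr k.
have two1 : 1 <= (2%:R : C) ^+ N.+1 by rewrite exprn_ege1 // ler1n.
have k0 : `|f`_0| * rho ^+ 0 <= 2%:R ^+ N.+1 * `|f`_0|.
  by rewrite expr0 mulr1 ler_peMl.
case: (leqP (size f) 1) => s1.
  case: k => [//|k].
  have -> : f`_k.+1 = 0 by apply/(leq_sizeP _ _ s1).
  by rewrite normr0 mul0r mulr_ge0 ?exprn_ge0 ?ler0n.
have /closed_rootP [w1 rw1] : size f != 1%N by rewrite neq_ltn s1 orbT.
have [g fg] := factor_theorem _ _ rw1.
have gn0 : g != 0 by apply: contraNneq f0 => g0; rewrite fg g0 mul0r coef0.
have cf : forall j, f`_j = (if j == 0%N then 0 else g`_j.-1) - g`_j * w1.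
  by move=> j; rewrite fg mulrBr coefB coefMX coefMC.
have hw1 : rho <= `|w1| by apply: hr.
have w1n0 : w1 != 0 by rewrite -normr_gt0; apply: lt_le_trans hw1.
have f0e : `|f`_0| = `|g`_0| * `|w1| by rewrite cf /= sub0r normrN normrM.
have sg : (size g <= N)%N.
  move: sf; rewrite fg size_mul // ?size_XsubC ?addn2 //.
  by rewrite -size_poly_eq0 size_XsubC.
have g0 : g`_0 != 0.
  by apply: contraNneq f0 => g00; rewrite cf /= g00 mul0r subr0.
have hrg : forall w, root g w -> rho <= `|w|.
  by move=> w /eqP rg; apply: hr; rewrite fg rootE hornerM rg mul0r.
have IHg := IH g sg g0 hrg.
case: k => [//|k].
rewrite cf /=.
have r0 : 0 <= rho by apply: ltW.
apply: (le_trans (ler_wpM2r (exprn_ge0 _ r0) (ler_normB _ _))).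
rewrite mulrDl normrM exprS mulrCA (mulrC _ `|w1|) -(mulrA `|w1|) -exprS.
apply: (@le_trans _ _ (`|w1| * (2%:R ^+ N * `|g`_0|) + `|w1| * (2%:R ^+ N * `|g`_0|))).
  apply: lerD; last by rewrite ler_wpM2l ?normr_ge0 // IHg.
  by apply: ler_pM => //; rewrite ?mulr_ge0 ?exprn_ge0 ?normr_ge0 // IHg.
rewrite f0e -mulr2n -mulr_natl exprS; rewrite le_eqVlt; apply/orP; left; apply/eqP; ring.
Qed.


Lemma pow_cont (t : C) : 0 <= t -> t <= 1 -> forall i : nat,
  `|t ^+ i - 1| <= (1 - t) * i%:R.
Proof.
move=> t0 t1; elim=> [|i IH]; first by rewrite expr0 subrr normr0 mulr0.
have -> : t ^+ i.+1 - 1 = t * (t ^+ i - 1) + (t - 1).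
  by rewrite exprS; ring.
apply: (le_trans (ler_normD _ _)).
have t1' : 0 <= 1 - t by rewrite subr_ge0.
rewrite normrM (ger0_norm t0) -normrN opprB (ger0_norm t1').
rewrite -nat1r mulrDr mulr1 addrC lerD2l.
apply: (le_trans (ler_wpM2r (normr_ge0 _) t1)).
by rewrite mul1r.
Qed.

Lemma choose_small (A B u : C) : 0 <= A -> 0 <= B -> 0 < u ->
  exists s, [/\ 0 < s, s < 1 & A * s + B * s < u].
Proof.
move=> A0 B0 u0.
set K := 2%:R * (A + B + 1) + u.
have AB0 : 0 <= A + B by rewrite addr_ge0.
have K0 : 0 < K by rewrite addr_gt0 // mulr_gt0 ?ltr0n // ltr_wpDl.
exists (u / K); split.
- by rewrite divr_gt0.
- by rewrite ltr_pdivrMr // mul1r /K ltrDr mulr_gt0 ?ltr0n // ltr_wpDl.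
- rewrite -mulrDl mulrA ltr_pdivrMr // mulrC ltr_pM2l //.
  rewrite /K; apply: (@lt_le_trans _ _ (A + B + 1)); first by rewrite ltrDl ltr01.
  rewrite ler_wpDr ?(ltW u0) //.
  by rewrite ler_peMl ?ler1n // addr_ge0.
Qed.

Definition P2 (c : nat -> nat -> C) (n m : nat) (x y : C) : C :=
  \sum_(j < m.+1) (\sum_(i < n.+1) c i j * x ^+ i) * y ^+ j.

Lemma hurwitz (c : nat -> nat -> C) (n m : nat) (a b : C) :
  (forall x y, `|x| < 1 -> `|y| < 1 -> P2 c n m x y != 0) ->
  `|a| = 1 -> `|b| < 1 -> P2 c n m a b = 0 ->
  forall j, (j <= m)%N -> \sum_(i < n.+1) c i j * a ^+ i = 0.
Proof.
move=> stab na nb Pab.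
pose Ai (i : nat) : {poly C} := \poly_(j < m.+1) (c i j * a ^+ i).
pose q (t : C) : {poly C} := \sum_(i < n.+1) t ^+ i *: Ai i.
have qE : forall t y, (q t).[y] = P2 c n m (t * a) y.
  move=> t y; rewrite /q /P2 horner_sum.
  under eq_bigr do rewrite hornerZ horner_poly mulr_sumr.
  rewrite exchange_big /=; apply: eq_bigr => j _; rewrite mulr_suml.
  by apply: eq_bigr => i _; rewrite exprMn; ring.
have qcoef : forall t j, (q t)`_j =
    if (j < m.+1)%N then \sum_(i < n.+1) c i j * (t * a) ^+ i else 0.
  move=> t j; rewrite /q coef_sum.
  under eq_bigr do rewrite coefZ coef_poly.
  case: ifP => _; last by rewrite big1 // => i _; rewrite mulr0.
  by apply: eq_bigr => i _; rewrite exprMn; ring.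
suff q1 : q 1 = 0.
  move=> j jm; have := qcoef 1 j; rewrite q1 coef0 ltnS jm mul1r.
  by move/esym.
apply/eqP; apply/negP => q1n0.
pose sh : {poly C} := 'X + b%:P.
pose s (t : C) := q t \Po sh.
have sE : forall t k, (s t)`_k = \sum_(i < n.+1) t ^+ i * (Ai i \Po sh)`_k.
  move=> t k; rewrite /s /q linear_sum coef_sum.
  by under eq_bigr do rewrite linearZ coefZ.
have ssize : forall t, size (s t) = size (q t).
  by move=> t; rewrite /s size_comp_poly2 // size_XaddC.
have s1n0 : s 1 != 0.
  by rewrite -size_poly_eq0 ssize size_poly_eq0; apply/negP.
set k := (size (s 1)).-1.
set eps := `|(s 1)`_k|.
have eps0 : 0 < eps.
  by rewrite normr_gt0 /k -lead_coefE lead_coef_eq0.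
have s0E : forall t, (s t)`_0 = P2 c n m (t * a) b.
  by move=> t; rewrite -horner_coef0 horner_comp /sh !hornerE qE.
have s10 : (s 1)`_0 = 0 by rewrite s0E mul1r.
pose rho := 1 - `|b|.
have rho0 : 0 < rho by rewrite subr_gt0.
pose M (j : nat) := \sum_(i < n.+1) i%:R * `|(Ai i \Po sh)`_j|.
have M0 : forall j, 0 <= M j.
  by move=> j; apply: sumr_ge0 => i _; rewrite mulr_ge0 ?ler0n.
have cont : forall t j, 0 <= t -> t <= 1 ->
    `|(s t)`_j - (s 1)`_j| <= (1 - t) * M j.
  move=> t j t0 t1; rewrite !sE -sumrB.
  apply: (le_trans (ler_norm_sum _ _ _)).
  rewrite /M mulr_sumr; apply: ler_sum => i _.
  rewrite expr1n -mulrBl normrM mulrA.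
  by apply: ler_wpM2r; [apply: normr_ge0 | apply: pow_cont].
have [s0 [s0p s01 hs0]] := @choose_small (2%:R ^+ m.+1 * M 0%N) (M k * rho ^+ k) (eps * rho ^+ k)
  (mulr_ge0 (exprn_ge0 m.+1 (ler0n C 2)) (M0 0%N))
  (mulr_ge0 (M0 k) (exprn_ge0 k (ltW rho0)))
  (mulr_gt0 eps0 (exprn_gt0 k rho0)).
pose t := 1 - s0.
have t0 : 0 <= t by rewrite subr_ge0 ltW.
have t1 : t <= 1 by rewrite lerBlDr lerDl ltW.
have e1t : 1 - t = s0 by rewrite /t opprB addrC subrK.
have tn : `|t| < 1 by rewrite ger0_norm // ltrBlDr ltrDl.
have st0 : (s t)`_0 != 0.
  by rewrite s0E; apply: stab => //; rewrite normrM na mulr1.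
have rootst : forall w, root (s t) w -> rho <= `|w|.
  move=> w /eqP; rewrite /s horner_comp /sh !hornerE qE => h.
  have : ~~ (`|w + b| < 1).
    have ta : `|t * a| < 1 by rewrite normrM na mulr1.
    by apply/negP => hw; move: (stab _ _ ta hw); rewrite h eqxx.
  move=> hw0; have hw : 1 <= `|w + b| by rewrite real_leNgt ?real1 ?normr_real.
  rewrite /rho lerBlDr; apply: (le_trans hw); exact: ler_normD.
have sst : (size (s t) <= m.+1)%N.
  rewrite ssize; apply/leq_sizeP => j hj.
  by rewrite qcoef ltnNge hj.
have RB := @root_bound rho rho0 _ _ sst st0 rootst k.
have C0 := cont t 0%N t0 t1.
rewrite s10 subr0 e1t in C0.
have Ck := cont t k t0 t1.
rewrite e1t in Ck.
have Ek : eps <= `|(s t)`_k| + s0 * M k.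
  have h := lerB_dist ((s 1)`_k) ((s t)`_k).
  rewrite distrC lerBlDl in h.
  exact: (le_trans h (lerD (le_refl _) Ck)).
have : eps * rho ^+ k < eps * rho ^+ k.
  apply: (le_lt_trans _ hs0).
  have rk0 : 0 <= rho ^+ k by rewrite exprn_ge0 // ltW.
  apply: (le_trans (ler_wpM2r rk0 Ek)).
  rewrite mulrDl; apply: lerD; last first.
    by rewrite -mulrA mulrC lexx.
  apply: (le_trans RB).
  rewrite -mulrA ler_wpM2l ?exprn_ge0 ?ler0n //.
  by rewrite mulrC.
by rewrite ltxx.
Qed.

End Aux.
Arguments P2 {R}.
Arguments hurwitz {R}. Arguments root_bound {R}. Arguments pow_cont {R}. Arguments choose_small {R}.

Section Aux2.
Variable R : realType.
Local Notation C := R[i].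

Lemma P2_swap (c : nat -> nat -> C) n m x y :
  P2 (fun j i => c i j) m n y x = P2 c n m x y.
Proof.
rewrite /P2; under eq_bigr do rewrite mulr_suml.
under [RHS]eq_bigr do rewrite mulr_suml.
rewrite exchange_big /=; apply: eq_bigr => i _; apply: eq_bigr => j _; ring.
Qed.

Lemma hurwitz' (c : nat -> nat -> C) (n m : nat) (a b : C) :
  (forall x y, `|x| < 1 -> `|y| < 1 -> P2 c n m x y != 0) ->
  `|a| < 1 -> `|b| = 1 -> P2 c n m a b = 0 ->
  forall i, (i <= n)%N -> \sum_(j < m.+1) c i j * b ^+ j = 0.
Proof.
move=> stab na nb Pab i hi.
apply: (@hurwitz R (fun j i => c i j) m n b a) => //.
  by move=> x y hx hy; rewrite P2_swap; apply: stab.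
by rewrite P2_swap.
Qed.

Lemma P2_x0 (g : nat -> nat -> C) n m y :
  P2 g n m 0 y = \sum_(j < m.+1) g 0%N j * y ^+ j.
Proof.
rewrite /P2; apply: eq_bigr => j _; rewrite big_ord_recl /= expr0 mulr1.
by rewrite big1 ?addr0 // => i _; rewrite expr0n /= mulr0.
Qed.

Lemma P2_y0 (g : nat -> nat -> C) n m x :
  P2 g n m x 0 = \sum_(i < n.+1) g i 0%N * x ^+ i.
Proof.
rewrite /P2 big_ord_recl /= expr0 mulr1.
by rewrite [X in _ + X]big1 ?addr0 // => j _; rewrite expr0n /= mulr0.
Qed.

Lemma conj_rev (d : nat -> C) m (x : C) : x != 0 ->
  \sum_(j < m.+1) (d (m - j)%N)^* * x ^+ j =
  x ^+ m * (\sum_(j < m.+1) d j * ((x^*)^-1) ^+ j)^*.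
Proof.
move=> x0.
rewrite rmorph_sum mulr_sumr /=.
have -> : \sum_(j < m.+1) x ^+ m * (d j * (x^*)^-1 ^+ j)^* =
          \sum_(j < m.+1) (d j)^* * x ^+ (m - j).
  apply: eq_bigr => j _; rewrite rmorphM rmorphXn /=.
  rewrite [X in _ * (_ * X ^+ j)](_ : _ = x^-1); last first.
    by rewrite ?fmorphV; congr (_^-1); exact: conjcK.
  by rewrite (exprB (leq_ord j)) ?unitfE // exprVn mulrCA.
rewrite (reindex_inj rev_ord_inj) /=.
apply: eq_bigr => j _; rewrite subSS subKn //; exact: (leq_ord j).
Qed.

End Aux2.
Arguments conj_rev {R}. Arguments P2_x0 {R}. Arguments P2_y0 {R}. Arguments hurwitz' {R}. Arguments P2_swap {R}.

Section Aux3.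
Variable R : realType.
Local Notation C := R[i].

Lemma Q_rel (c : nat -> nat -> C) n m (a b : C) : a != 0 -> b != 0 ->
  P2 (fun i j => (c (n - i)%N (m - j)%N)^*) n m a b =
  a ^+ n * b ^+ m * (P2 c n m ((a^*)^-1) ((b^*)^-1))^*.
Proof.
move=> a0 b0.
pose D k := \sum_(i < n.+1) c i k * ((a^*)^-1) ^+ i.
transitivity (a ^+ n * \sum_(j < m.+1) (D (m - j)%N)^* * b ^+ j).
  rewrite /P2 mulr_sumr; apply: eq_bigr => j _.
  by rewrite (conj_rev (fun i => c i (m - j)%N) n a a0) mulrA.
by rewrite (conj_rev D m b b0) mulrA.
Qed.

Lemma coef2_mk2 n m (f : nat -> nat -> C) i j :
  coef2 (mk2 n m f) i j = if (i < n.+1)%N && (j < m.+1)%N then f i j else 0.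
Proof.
rewrite /coef2 /mk2 coef_poly; case: ifP => _.
  by rewrite coef_poly andbT.
by rewrite coef0 andbF.
Qed.

Lemma eval2_mk2 n m (f : nat -> nat -> C) a b :
  eval2 (mk2 n m f) a b = P2 f n m a b.
Proof.
rewrite /eval2 /mk2 horner_poly horner_sum; apply: eq_bigr => j _.
by rewrite hornerM horner_poly horner_exp hornerC.
Qed.

Lemma mk2_coef2 (p : {poly {poly C}}) n m :
  has_bidegree p n m -> p = mk2 n m (coef2 p).
Proof.
move=> [p0 [d1 d2]].
have sp : size p = m.+1.
  by rewrite -d2 /deg2 prednK // lt0n size_poly_eq0.
apply/polyP => j; rewrite /mk2 coef_poly.
case: ifP => hj; last by rewrite nth_default // sp leqNgt hj.
apply/polyP => i; rewrite coef_poly.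
case: ifP => hi //.
rewrite nth_default // leqNgt.
apply/negP => hs.
have hjp : (j < size p)%N by rewrite sp.
have h : ((size (p`_j)%R).-1 <= n)%N.
  rewrite -d1; exact: (leq_bigmax (F := fun j : 'I_(size p) => (size (p`_j)%R).-1) (Ordinal hjp)).
move/negbT: hi; rewrite -leqNgt => hi.
have s0 : (0 < size (p`_j)%R)%N by apply: leq_ltn_trans hs.
move: h; rewrite -ltnS prednK // => h.
by have := leq_trans hs h; rewrite ltnS leqNgt hi.
Qed.

Lemma horner_outer n m (f : nat -> nat -> C) (b : C) i :
  ((mk2 n m f).[b%:P])`_i =
  if (i < n.+1)%N then \sum_(j < m.+1) f i j * b ^+ j else 0.
Proof.
rewrite /mk2 horner_poly coef_sum.
under eq_bigr do rewrite -rmorphXn coefMC coef_poly.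
case: ifP => _ //.
by rewrite big1 // => j _; rewrite mul0r.
Qed.

Lemma cf_outer (p q : {poly {poly C}}) (b : C) :
  no_common_factor p q -> p.[b%:P] = 0 -> q.[b%:P] = 0 -> False.
Proof.
move=> H hp hq.
have /factor_theorem [r pr] : root p b%:P by apply/eqP.
have /factor_theorem [s qs] : root q b%:P by apply/eqP.
have [c0 e] := H _ r s (etrans pr (mulrC _ _)) (etrans qs (mulrC _ _)).
have := size_polyC_leq1 (c0%:P); rewrite -e size_XsubC.
by [].
Qed.

Lemma factor_inner (f : {poly {poly C}}) (a : C) :
  (forall j, root f`_j a) ->
  f = ('X - a%:P)%:P * \poly_(j < size f) (f`_j %/ ('X - a%:P)).
Proof.
move=> hr; apply/polyP => j; rewrite coefCM coef_poly.
case: ifP => hj; last by rewrite mulr0 nth_default // leqNgt hj.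
by rewrite mulrC divpK // dvdp_XsubCl.
Qed.

Lemma cf_inner (p q : {poly {poly C}}) (a : C) :
  no_common_factor p q -> (forall j, root p`_j a) -> (forall j, root q`_j a) -> False.
Proof.
move=> H hp hq.
have [c0 e] := H _ _ _ (factor_inner _ _ hp) (factor_inner _ _ hq).
move/polyC_inj: e => e.
have := size_polyC_leq1 c0; rewrite -e size_XsubC.
by [].
Qed.

End Aux3.
Arguments Q_rel {R}.
Arguments coef2_mk2 {R}.
Arguments eval2_mk2 {R}.
Arguments mk2_coef2 {R}.
Arguments horner_outer {R}.
Arguments cf_outer {R}.
Arguments factor_inner {R}.
Arguments cf_inner {R}.

Section Aux4.
Variable R : realType.
Local Notation C := R[i].

Lemma tri (a : C) : `|a| < 1 \/ `|a| = 1 \/ 1 < `|a|.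
Proof.
case: (real_ltgtP (normr_real a) (real1 C)) => h; auto.
Qed.

Lemma inv_pt (a : C) : 1 <= `|a| ->
  [/\ a != 0, `|(a^*)^-1| = `|a|^-1 & `|(a^*)^-1| <= 1].
Proof.
move=> ha.
have a0 : a != 0 by rewrite -normr_gt0; apply: lt_le_trans ha.
have na : 0 < `|a| by rewrite normr_gt0.
have e : `|(a^*)^-1| = `|a|^-1.
  by rewrite normfV normcJ.
by split => //; rewrite e invf_le1.
Qed.

Lemma unit_inv (a : C) : `|a| = 1 -> (a^*)^-1 = a.
Proof.
move=> ha.
have a0 : a != 0 by rewrite -normr_gt0 ha ltr01.
have h : a * a^* = 1 by rewrite -sqr_normc ha expr1n.
rewrite -[RHS](invrK a); congr (_^-1).
by apply: (mulfI a0); rewrite h mulfV.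
Qed.

Lemma P2_00 (g : nat -> nat -> C) n m : P2 g n m 0 0 = g 0%N 0%N.
Proof.
rewrite P2_x0 big_ord_recl /= expr0 mulr1.
by rewrite [X in _ + X]big1 ?addr0 // => j _; rewrite expr0n /= mulr0.
Qed.

End Aux4.
Arguments tri {R}.
Arguments inv_pt {R}.
Arguments unit_inv {R}.
Arguments P2_00 {R}.

Theorem lemma10p1 (R : realType) (n m : nat) (p : {poly {poly R[i]}}) :
  semi_stable n m p ->
  forall x y : option R[i],
    ext_eval n m p x y = 0 -> ext_eval n m (refl n m p) x y = 0 ->
    (in_D x /\ in_Dinv y) \/ (in_T x /\ in_T y) \/ (in_Dinv x /\ in_D y).
Proof.
move=> [bid [stab0 ncf]] x y hP hQ.
have pE := mk2_coef2 p n m bid.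
set c := coef2 p in pE.
have stab : forall x y : R[i], `|x| < 1 -> `|y| < 1 -> P2 c n m x y != 0.
  by move=> x0 y0 hx hy; rewrite -eval2_mk2 -pE; apply: stab0.
have KTD : forall a b : R[i], `|a| = 1 -> `|b| < 1 -> P2 c n m a b = 0 -> False.
  move=> a b ha hb hab.
  have hj := hurwitz c n m a b stab ha hb hab.
  have a0 : a != 0 by rewrite -normr_gt0 ha ltr01.
  apply: (cf_inner _ _ a ncf) => j.
    rewrite pE /mk2 coef_poly; case: ifP => hj'; last by rewrite root0.
    by rewrite /root horner_poly hj.
  rewrite /refl /mk2 coef_poly; case: ifP => hj'; last by rewrite root0.
  rewrite /root horner_poly -/c.
  rewrite (conj_rev (fun i => c i (m - j)%N) n a a0) unit_inv //.
  by rewrite hj ?leq_subr // rmorph0 mulr0.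
have KDT : forall a b : R[i], `|a| < 1 -> `|b| = 1 -> P2 c n m a b = 0 -> False.
  move=> a b ha hb hab.
  have hi := hurwitz' c n m a b stab ha hb hab.
  have b0 : b != 0 by rewrite -normr_gt0 hb ltr01.
  apply: (cf_outer _ _ b ncf).
    apply/polyP => i; rewrite pE horner_outer coef0; case: ifP => hi' //.
    by rewrite hi.
  apply/polyP => i; rewrite /refl horner_outer coef0; case: ifP => hi' //.
  rewrite -/c (conj_rev (fun j => c (n - i)%N j) m b b0) unit_inv //.
  by rewrite hi ?leq_subr // rmorph0 mulr0.
have Kfin : forall a b : R[i], P2 c n m a b = 0 -> `|a| <= 1 -> `|b| <= 1 ->
    `|a| = 1 /\ `|b| = 1.
  move=> a b hab; rewrite le_eqVlt => /orP [/eqP ha | ha];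
    rewrite le_eqVlt => /orP [/eqP hb | hb] //.
  - by case: (KTD a b ha hb hab).
  - by case: (KDT a b ha hb hab).
  - by move: (stab a b ha hb); rewrite hab eqxx.
have Qzero : forall a b : R[i], 1 <= `|a| -> 1 <= `|b| ->
    P2 (fun i j => (c (n - i)%N (m - j)%N)^*) n m a b = 0 ->
    `|a| = 1 /\ `|b| = 1.
  move=> a b ha hb hab.
  have [a0 ea la] := inv_pt a ha.
  have [b0 eb lb] := inv_pt b hb.
  move: hab; rewrite Q_rel // => /eqP; rewrite !mulf_eq0 !expf_eq0 (negbTE a0) (negbTE b0) !andbF /=.
  rewrite conjc_eq0 => /eqP h.
  have [h1 h2] := Kfin _ _ h la lb.
  rewrite ea in h1; rewrite eb in h2.
  by split; rewrite -[LHS]invrK ?h1 ?h2 invr1.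
have n01 : `|0 : R[i]| = 1 -> False.
  by rewrite normr0 => /eqP; rewrite eq_sym oner_eq0.
have nz : `|0 : R[i]| <= 1 by rewrite normr0 ler01.
have ge1 : forall z : R[i], `|z| = 1 -> 1 <= `|z| by move=> z ->.
case: x y hP hQ => [a|] [b|] /= hP hQ.
- rewrite pE eval2_mk2 in hP.
  rewrite /refl eval2_mk2 -/c in hQ.
  case: (tri a) => [ha|[ha|ha]]; case: (tri b) => [hb|[hb|hb]].
  + by move: (stab a b ha hb); rewrite hP eqxx.
  + by case: (KDT a b ha hb hP).
  + by left.
  + by case: (KTD a b ha hb hP).
  + by right; left.
  + have [_ hb'] := Qzero a b (ge1 _ ha) (ltW hb) hQ.
    by move: hb; rewrite hb' ltxx.
  + by right; right.
  + have [ha' _] := Qzero a b (ltW ha) (ge1 _ hb) hQ.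
    by move: ha; rewrite ha' ltxx.
  + have [ha' _] := Qzero a b (ltW ha) (ltW hb) hQ.
    by move: ha; rewrite ha' ltxx.
- case: (tri a) => [ha|ha]; first by left.
  have ha1 : 1 <= `|a| by case: ha => [->|/ltW].
  have [a0 ea la] := inv_pt a ha1.
  rewrite /rev2 eval2_mk2 P2_y0 in hQ.
  have hQ' : \sum_(i < n.+1) (c (n - i)%N 0%N)^* * a ^+ i = 0.
    rewrite -[RHS]hQ; apply: eq_bigr => i _.
    by rewrite /refl coef2_mk2 subn0 ltn_ord ltnSn subnn.
  move: hQ'; rewrite (conj_rev (fun i => c i 0%N) n a a0) => /eqP.
  rewrite mulf_eq0 expf_eq0 (negbTE a0) andbF /= conjc_eq0 -(P2_y0 c n m) => /eqP h.
  have [_ h0] := Kfin _ _ h la nz.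
  by case: (n01 h0).
- case: (tri b) => [hb|hb]; first by right; right.
  have hb1 : 1 <= `|b| by case: hb => [->|/ltW].
  have [b0 eb lb] := inv_pt b hb1.
  rewrite /rev1 eval2_mk2 P2_x0 in hQ.
  have hQ' : \sum_(j < m.+1) (c 0%N (m - j)%N)^* * b ^+ j = 0.
    rewrite -[RHS]hQ; apply: eq_bigr => j _.
    by rewrite /refl coef2_mk2 subn0 ltn_ord ltnSn subnn.
  move: hQ'; rewrite (conj_rev (fun j => c 0%N j) m b b0) => /eqP.
  rewrite mulf_eq0 expf_eq0 (negbTE b0) andbF /= conjc_eq0 -(P2_x0 c n) => /eqP h.
  have [h0 _] := Kfin _ _ h nz lb.
  by case: (n01 h0).
- rewrite /rev1 eval2_mk2 P2_00 coef2_mk2 /= subn0 /rev2 coef2_mk2 ltnSn /= subn0 in hQ.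
  rewrite ltnSn !subnn /= -/c in hQ.
  move: (stab 0 0); rewrite normr0 ltr01 P2_00 -conjc_eq0 hQ eqxx.
  by move=> /(_ isT isT).
Qed.
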